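(* Let $\mathbb{K}$ be an infinite field, let $P,Q\in\mathbb{K}[x_1,\dots,x_n]$, let $X$ be a nonsingular irreducible affine variety over $\mathbb{K}$, and let $\pi=(\pi_1,\dots,\pi_n):X\to\mathbb{K}^n$ be a regular mapping such that $Q\circ\pi$ is not identically zero and $\frac{P\circ\pi}{Q\circ\pi}\in\mathcal{P}(X)_{x_0}$ for some point $x_0\in X$. Let $\varphi=(\varphi_1,\dots,\varphi_n):(X,x_0)\to\mathbb{K}^n$ be a germ of a regular mapping such that for each $1\le i\le n$, $$\varphi_i-\pi_i\in(Q\circ\pi)\,\mathfrak{m}_{x_0}\quad\text{in the ring }\mathcal{P}(X)_{x_0},$$ where $\mathfrak{m}_{x_0}$ is the maximal ideal of $\mathcal{P}(X)_{x_0}$. Then $Q\circ\varphi$ is not identically zero and the rational function $\frac{P\circ\varphi}{Q\circ\varphi}$ is regular at $x_0$, i.e. belongs to $\mathcal{P}(X)_{x_0}$.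
   Context: $\mathcal{P}(X)$ is the coordinate ring of the affine variety $X$ and $\mathcal{P}(X)_{x_0}$ its localisation at the maximal ideal of $x_0$ (the ring of germs of regular functions at $x_0$). A rational function is regular at $x_0$ if it lies in $\mathcal{P}(X)_{x_0}$ inside the field of fractions. *)

(* Defs.v *)
From HB Require Import structures.
From mathcomp Require Import all_boot all_order all_algebra.
From mathcomp Require Import fraction.
From mathcomp.multinomials Require Import mpoly.

Set Implicit Arguments.
Unset Strict Implicit.
Unset Printing Implicit Defensive.

Import GRing.Theory.
Local Open Scope ring_scope.

Notation "x %:F" := (@FracField.tofrac _ x) : ring_scope.

(* Points of K^m are functions 'I_m -> K; K[y] = {mpoly K[m]};         *)
(* K(y) = {fraction {mpoly K[m]}}.                                     *)

Section Defs.
Variables (K : fieldType) (m : nat).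

Definition point := 'I_m -> K.

Definition infinite_field := forall s : seq K, exists x : K, x \notin s.

Definition vanishing (X : point -> Prop) (p : {mpoly K[m]}) : Prop :=
  forall x, X x -> p.@[x] = 0.

Definition zero_set (S : {mpoly K[m]} -> Prop) (x : point) : Prop :=
  forall p, S p -> p.@[x] = 0.

Definition algebraic_set (X : point -> Prop) : Prop :=
  exists S, forall x, X x <-> zero_set S x.

Definition irreducible (X : point -> Prop) : Prop :=
  (exists x, X x) /\
  forall Y Z : point -> Prop, algebraic_set Y -> algebraic_set Z ->
    (forall x, X x -> Y x \/ Z x) ->
    (forall x, X x -> Y x) \/ (forall x, X x -> Z x).

Definition affine_variety (X : point -> Prop) := algebraic_set X.

Definition prime_ideal (I : {mpoly K[m]} -> Prop) : Prop :=
  [/\ I 0, ~ I 1,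
      (forall p q, I p -> I q -> I (p + q)),
      (forall p q, I q -> I (p * q)) &
      (forall p q, I (p * q) -> I p \/ I q)].

(* a chain p_0 ⊊ p_1 ⊊ ... ⊊ p_d of prime ideals of K[y] containing
   I(X), i.e. a chain of prime ideals of length d in P(X) = K[y]/I(X) *)
Definition prime_chain (X : point -> Prop) (d : nat) : Prop :=
  exists c : nat -> ({mpoly K[m]} -> Prop),
    (forall i, (i <= d)%N ->
       prime_ideal (c i) /\ (forall p, vanishing X p -> c i p)) /\
    (forall i, (i < d)%N ->
       (forall p, c i p -> c i.+1 p) /\ exists p, c i.+1 p /\ ~ c i p).

Definition dimension (X : point -> Prop) (d : nat) : Prop :=
  prime_chain X d /\ ~ prime_chain X d.+1.

Definition jacobian k (f : 'I_k -> {mpoly K[m]}) (x : point) : 'M[K]_(k, m) :=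
  \matrix_(i < k, j < m) (f i)^`M(j).@[x].

Definition nonsingular_point (X : point -> Prop) (x : point) : Prop :=
  exists d, dimension X d /\
    (exists k (f : 'I_k -> {mpoly K[m]}),
        (forall i, vanishing X (f i)) /\ \rank (jacobian f x) = (m - d)%N) /\
    (forall k (f : 'I_k -> {mpoly K[m]}),
        (forall i, vanishing X (f i)) -> (\rank (jacobian f x) <= m - d)%N).

Definition nonsingular (X : point -> Prop) : Prop :=
  forall x, X x -> nonsingular_point X x.

Definition ratfun := {fraction {mpoly K[m]}}.

(* elements of K[y]_{m_x0}: rational functions a/b with b(x0) <> 0; these
   are the lifts of the elements of P(X)_{x0} = K[y]_{m_x0} / I(X) K[y]_{m_x0} *)
Definition in_local (x0 : point) (f : ratfun) : Prop :=
  exists a b : {mpoly K[m]}, b.@[x0] != 0 /\ f = a%:F / b%:F.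

(* lifts of the elements of the maximal ideal m_{x0} of P(X)_{x0} *)
Definition in_maxideal (x0 : point) (f : ratfun) : Prop :=
  exists a b : {mpoly K[m]},
    a.@[x0] = 0 /\ b.@[x0] != 0 /\ f = a%:F / b%:F.

(* elements of K[y]_{m_x0} whose image in P(X)_{x0} is zero,
   i.e. the ideal I(X) K[y]_{m_x0} *)
Definition zero_germ (X : point -> Prop) (x0 : point) (f : ratfun) : Prop :=
  exists a b : {mpoly K[m]},
    vanishing X a /\ b.@[x0] != 0 /\ f = a%:F / b%:F.

Definition poly_comp n (P : {mpoly K[n]}) (pi : 'I_n -> {mpoly K[m]})
  : {mpoly K[m]} := mmap (fun c : K => c%:MP) pi P.

Definition rat_comp n (P : {mpoly K[n]}) (phi : 'I_n -> ratfun) : ratfun :=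
  mmap (fun c : K => (c%:MP : {mpoly K[m]})%:F) phi P.

End Defs.

(* Main.v *)
Require Import Defs.
From HB Require Import structures.
From mathcomp Require Import all_boot all_order all_algebra.
From mathcomp Require Import fraction.
From mathcomp.multinomials Require Import mpoly.
From mathcomp Require Import ring.
Import GRing.Theory.
Local Open Scope ring_scope.

Lemma addfrac (F : fieldType) (x y u v : F) : u != 0 -> v != 0 ->
  x/u + y/v = (v*x + u*y)/(u*v).
Proof. move=> *; field. by apply/andP. Qed.
Lemma oppfrac (F : fieldType) (x u : F) : u != 0 -> - (x/u) = ((-1)*x)/u.
Proof. move=> *; field. done. Qed.
Lemma mulfrac (F : fieldType) (x y u v : F) : u != 0 -> v != 0 ->
  (x/u) * (y/v) = (x*y)/(u*v).
Proof. move=> *; field. by apply/andP. Qed.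

Section Frac.
Variables (K : fieldType) (m : nat) (x0 : point K m).

Definition Fr (Pa : {mpoly K[m]} -> Prop) (f : ratfun K m) :=
  exists a b : {mpoly K[m]}, Pa a /\ b.@[x0] != 0 /\ f = a%:F / b%:F.
Definition idl (Pa : {mpoly K[m]} -> Prop) :=
  [/\ Pa 0, (forall p q, Pa p -> Pa q -> Pa (p + q)) & (forall r p, Pa p -> Pa (r * p))].

Lemma nzF (b : {mpoly K[m]}) : b.@[x0] != 0 -> (b%:F : ratfun K m) != 0.
Proof. move=> H; rewrite tofrac_eq0; apply: contra H => /eqP ->; by rewrite raddf0. Qed.

Lemma Fr_add Pa f g : idl Pa -> Fr Pa f -> Fr Pa g -> Fr Pa (f + g).
Proof.
case=> _ HD HM [a1 [b1 [P1 [n1 ->]]]] [a2 [b2 [P2 [n2 ->]]]].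
exists (b2*a1 + b1*a2), (b1*b2); split; first by apply: HD; apply: HM.
split; first by rewrite mevalM mulf_neq0.
by rewrite addfrac ?nzF // tofracD !tofracM.
Qed.

Lemma Fr_opp Pa f : idl Pa -> Fr Pa f -> Fr Pa (- f).
Proof.
case=> _ HD HM [a1 [b1 [P1 [n1 ->]]]].
exists ((-1)*a1), b1; split; first by apply: HM.
by split=> //; rewrite oppfrac ?nzF // tofracM tofracN tofrac1.
Qed.

Lemma Fr_mulL Pa l f : idl Pa -> Fr (fun _ => True) l -> Fr Pa f -> Fr Pa (l * f).
Proof.
case=> _ HD HM [a1 [b1 [P1 [n1 ->]]]] [a2 [b2 [P2 [n2 ->]]]].
exists (a1*a2), (b1*b2); split; first by apply: HM.
split; first by rewrite mevalM mulf_neq0.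
by rewrite mulfrac ?nzF // !tofracM.
Qed.

Lemma Fr0 Pa : idl Pa -> Fr Pa 0.
Proof.
case=> H0 _ _; exists 0, 1; split=> //; split; first by rewrite mevalC oner_neq0.
by rewrite tofrac0 mul0r.
Qed.

Lemma FrT Pa f : Fr Pa f -> Fr (fun _ => True) f.
Proof. by move=> [a [b [_ [H ->]]]]; exists a, b. Qed.

Lemma FrC c : Fr (fun _ => True) ((c%:MP : {mpoly K[m]})%:F).
Proof.
exists c%:MP, 1; split=> //; split; first by rewrite mevalC oner_neq0.
by rewrite tofrac1 divr1.
Qed.

Lemma idlT : idl (fun _ => True). Proof. by []. Qed.
Lemma idlM : idl (fun a : {mpoly K[m]} => a.@[x0] = 0).
Proof.
split; first by rewrite raddf0.
  by move=> p q Hp Hq; rewrite mevalD Hp Hq addr0.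
by move=> r p Hp; rewrite mevalM Hp mulr0.
Qed.
Lemma idlZ X : idl (vanishing X).
Proof.
split; first by move=> x _; rewrite raddf0.
  by move=> p q Hp Hq x Xx; rewrite mevalD Hp // Hq // addr0.
by move=> r p Hp x Xx; rewrite mevalM Hp // mulr0.
Qed.

End Frac.
Arguments nzF {K m x0 b}.
Arguments FrT {K m x0 Pa f}.
Lemma mulstep (R : comRingType) (u v u' v' : R) : u * u' - v * v' = u * (u' - v') + v' * (u - v).
Proof. ring. Qed.

Section Taylor.
Variables (K : fieldType) (m n : nat) (L J : ratfun K m -> Prop).
Hypotheses (L0 : L 0) (L1 : L 1) (LC : forall c, L ((c%:MP : {mpoly K[m]})%:F))
  (LD : forall x y, L x -> L y -> L (x + y)) (LM : forall x y, L x -> L y -> L (x * y))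
  (J0 : J 0) (JD : forall x y, J x -> J y -> J (x + y))
  (JM : forall l x, L l -> J x -> J (l * x)).

Let Kp u v := L u /\ L v /\ J (u - v).

Lemma Kp_mul u v u' v' : Kp u v -> Kp u' v' -> Kp (u * u') (v * v').
Proof.
move=> [Lu [Lv Ju]] [Lu' [Lv' Ju']]; split; first exact: LM.
split; first exact: LM.
by rewrite mulstep; apply: JD; apply: JM.
Qed.

Lemma Kp_exp u v k : Kp u v -> Kp (u ^+ k) (v ^+ k).
Proof.
move=> H; elim: k => [|k IH]; first by rewrite !expr0; split=> //; split=> //; rewrite subrr.
by rewrite !exprS; apply: Kp_mul.
Qed.

Lemma taylor (a b : 'I_n -> ratfun K m) (Q : {mpoly K[n]}) :
  (forall i, Kp (a i) (b i)) -> Kp (rat_comp Q a) (rat_comp Q b).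
Proof.
move=> Hab; rewrite /rat_comp.
change (Kp (mmap (@FracField.tofrac _ \o @mpolyC m K) a Q) (mmap (@FracField.tofrac _ \o @mpolyC m K) b Q)).
elim/mpolyind: Q => [|c mm p _ _ IH].
  by rewrite !mmap0; split=> //; split=> //; rewrite subrr.
rewrite !mmapD !mmapZ !mmapX.
have Hm : Kp (mmap1 a mm) (mmap1 b mm).
  rewrite /mmap1; apply: (big_ind2 Kp) => //.
    by split=> //; split=> //; rewrite subrr.
    exact: Kp_mul.
  by move=> i _; apply: Kp_exp.
have Hc : Kp ((c%:MP : {mpoly K[m]})%:F) ((c%:MP : {mpoly K[m]})%:F).
  by split=> //; split=> //; rewrite subrr.
case: (Kp_mul _ _ _ _ Hc Hm) => [A1 [A2 A3]]; case: IH => [B1 [B2 B3]].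
split; first exact: LD.
split; first exact: LD.
by rewrite opprD addrACA; apply: JD.
Qed.
End Taylor.

Lemma tofrac_comp (K : fieldType) (m n : nat) (Q : {mpoly K[n]}) (pi : 'I_n -> {mpoly K[m]}) :
  (poly_comp Q pi)%:F = rat_comp Q (fun i => (pi i)%:F).
Proof.
rewrite /poly_comp /rat_comp /mmap rmorph_sum; apply: eq_bigr => mm _.
rewrite rmorphM rmorph_prod; congr (_ * _); apply: eq_bigr => i _.
by rewrite rmorphXn.
Qed.

Lemma cross (F : fieldType) (x y u z v : F) : u != 0 -> v != 0 ->
  x * (y / u) = z / v -> x * y * v = z * u.
Proof.
move=> nu nv E.
have -> : x * y = x * (y / u) * u by rewrite mulrA mulfVK.
by rewrite E mulrAC mulfVK.
Qed.

Lemma onefrac (F : fieldType) (x u : F) : u != 0 -> 1 + x / u = (u + x) / u.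
Proof. move=> nu; by rewrite mulrDl divff. Qed.

Lemma invfrac (F : fieldType) (x u : F) : u != 0 -> x != 0 -> (u / x) * (x / u) = 1.
Proof. move=> nu nx; by rewrite mulrA mulfVK // divff. Qed.

Lemma ident (R : comRingType) (Pp c r1 z1 r2 z2 u h : R) : u * (1 + r2) = 1 ->
  (c*r1+z1+Pp) - u*(h+r1)*(c*r2+z2+c) = (Pp - h*c) + (z1 + (-(u*(h+r1)))*z2).
Proof.
move=> H.
have : (c*r1+z1+Pp) - u*(h+r1)*(c*r2+z2+c) - ((Pp - h*c) + (z1 + (-(u*(h+r1)))*z2))
   = (h+r1)*c*(1 - u*(1+r2)) by ring.
by rewrite H subrr mulr0 => /eqP; rewrite subr_eq0 => /eqP.
Qed.

Lemma ident2 (R : comRingType) (Qp c r2 z2 : R) : Qp - c = c * r2 + z2 ->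
  c * (1 + r2) = Qp + - z2.
Proof. by move/eqP; rewrite subr_eq => /eqP ->; ring. Qed.

Lemma keyZ (K : fieldType) (m : nat) (X : point K m -> Prop) (x0 : point K m)
  (q e b : {mpoly K[m]}) :
  irreducible X -> X x0 -> (exists x, X x /\ q.@[x] != 0) ->
  e.@[x0] != 0 -> b.@[x0] != 0 ->
  ~ @Fr _ _ x0 (vanishing X) (q%:F * (e%:F / b%:F)).
Proof.
move=> [_ irr] Xx0 [x1 [Xx1 qx1]] ne nb [a2 [b2 [va2 [nb2 E]]]].
have E2 := cross _ _ _ _ _ _ (nzF nb) (nzF nb2) E.
have E3 : q * e * b2 = a2 * b by apply/eqP; rewrite -tofrac_eq !tofracM E2.
have alg : forall p : {mpoly K[m]}, algebraic_set (fun x => p.@[x] = 0).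
  move=> p; exists (fun r => r = p) => x; split=> [H r -> // | H]; exact: H.
have cov : forall x, X x -> (fun x => q.@[x] = 0) x \/ (fun x => (e * b2).@[x] = 0) x.
  move=> x Xx /=.
  have : (q * e * b2).@[x] = 0 by rewrite E3 mevalM va2 // mul0r.
  rewrite -mulrA mevalM => /eqP; rewrite mulf_eq0 => /orP [/eqP|/eqP]; by [left|right].
case: (irr _ _ (alg q) (alg (e * b2)) cov) => H.
  by move: qx1; rewrite H // eqxx.
by move: (H x0 Xx0) => /eqP; rewrite mevalM mulf_eq0 (negbTE ne) (negbTE nb2).
Qed.

Theorem lemma2p4 (K : fieldType) (n m : nat)
  (P Q : {mpoly K[n]}) (X : point K m -> Prop)
  (pi : 'I_n -> {mpoly K[m]}) (x0 : point K m) (phi : 'I_n -> ratfun K m) :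
  infinite_field K ->
  affine_variety X -> irreducible X -> nonsingular X ->
  X x0 ->
  (* Q o pi is not identically zero on X *)
  (exists x, X x /\ (poly_comp Q pi).@[x] != 0) ->
  (* (P o pi)/(Q o pi) belongs to P(X)_{x0} *)
  (exists h, in_local x0 h /\
     zero_germ X x0 ((poly_comp P pi)%:F - h * (poly_comp Q pi)%:F)) ->
  (* phi is a germ of a regular mapping at x0 *)
  (forall i, in_local x0 (phi i)) ->
  (* phi_i - pi_i in (Q o pi) m_{x0} in P(X)_{x0} *)
  (forall i, exists r, in_maxideal x0 r /\
     zero_germ X x0 (phi i - (pi i)%:F - (poly_comp Q pi)%:F * r)) ->
  (* conclusion *)
  ~ zero_germ X x0 (rat_comp Q phi) /\
  (exists h, in_local x0 h /\
     zero_germ X x0 (rat_comp P phi - h * rat_comp Q phi)).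
Proof.
move=> _ _ irr _ Xx0 Hq [h [Lh Zh]] Hphi Hr.
set c := (poly_comp Q pi)%:F.
pose L := @Fr _ _ x0 (fun _ => True).
pose M := @Fr _ _ x0 (fun a : {mpoly K[m]} => a.@[x0] = 0).
pose Z := @Fr _ _ x0 (vanishing X).
pose J f := exists r z, M r /\ Z z /\ f = c * r + z.
have toL : forall f, in_local x0 f -> L f by move=> f [a [b [H E]]]; exists a, b.
have fromL : forall f, L f -> in_local x0 f by move=> f [a [b [_ [H E]]]]; exists a, b.
have L0 : L 0 by apply: Fr0; apply: idlT.
have L1 : L 1.
  exists 1, 1; split=> //; split; first by rewrite mevalC oner_neq0.
  by rewrite tofrac1 divr1.
have LC : forall k, L ((k%:MP : {mpoly K[m]})%:F) by move=> k; apply: FrC.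
have LD : forall x y, L x -> L y -> L (x + y) by move=> x y; apply: Fr_add; apply: idlT.
have LM : forall x y, L x -> L y -> L (x * y) by move=> x y; apply: Fr_mulL; apply: idlT.
have J0 : J 0.
  exists 0, 0; split; first by apply: Fr0; apply: idlM.
  by split; [apply: Fr0; apply: idlZ | rewrite mulr0 addr0].
have JD : forall x y, J x -> J y -> J (x + y).
  move=> x y [r1 [z1 [M1 [Z1 ->]]]] [r2 [z2 [M2 [Z2 ->]]]].
  exists (r1 + r2), (z1 + z2); split; first by apply: Fr_add => //; apply: idlM.
  split; first by apply: Fr_add => //; apply: idlZ.
  by rewrite mulrDr addrACA.
have JM : forall l x, L l -> J x -> J (l * x).
  move=> l x Ll [r1 [z1 [M1 [Z1 ->]]]].
  exists (l * r1), (l * z1); split; first by apply: Fr_mulL => //; apply: idlM.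
  split; first by apply: Fr_mulL => //; apply: idlZ.
  by rewrite mulrDr mulrCA.
have Hab : forall i, L (phi i) /\ L ((pi i)%:F) /\ J (phi i - (pi i)%:F).
  move=> i; split; first exact: toL.
  split; first by exists (pi i), 1; split=> //; split; [rewrite mevalC oner_neq0 | rewrite tofrac1 divr1].
  case: (Hr i) => r [Mr Zr]; exists r, (phi i - (pi i)%:F - c * r).
  by split=> //; split=> //; rewrite [RHS]addrC subrK.
have TQ := @taylor _ _ _ L J L0 L1 LC LD LM J0 JD JM _ _ Q Hab.
have TP := @taylor _ _ _ L J L0 L1 LC LD LM J0 JD JM _ _ P Hab.
rewrite -!tofrac_comp -/c in TQ TP.
case: TQ => _ [_ [r2 [z2 [[a [b [va [nb Er2]]]] [Z2 EQ]]]]].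
case: TP => _ [_ [r1 [z1 [M1 [Z1 EP]]]]].
have ne : (b + a).@[x0] != 0 by rewrite mevalD va addr0.
have E1 : 1 + r2 = (b + a)%:F / b%:F by rewrite Er2 onefrac ?(nzF nb) // rmorphD.
split.
  move=> HZ; apply: (@keyZ _ _ _ _ (poly_comp Q pi) _ _ irr Xx0 Hq ne nb).
  rewrite -/c -E1 (ident2 _ _ _ _ _ EQ).
  by apply: Fr_add => //; [apply: idlZ | apply: Fr_opp => //; apply: idlZ].
pose u := b%:F / (b + a)%:F.
have Lu : L u by exists b, (b + a).
have Hu : u * (1 + r2) = 1 by rewrite E1 /u; exact: (invfrac _ _ _ (nzF nb) (nzF ne)).
exists (u * (h + r1)); split.
  by apply: fromL; apply: LM => //; apply: LD; [exact: toL | exact: FrT M1].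
move/eqP: EQ; rewrite subr_eq => /eqP ->.
move/eqP: EP; rewrite subr_eq => /eqP ->.
rewrite ident //.
have iZ := idlZ K m X.
have iT := idlT K m.
have Lr1 : L r1 by exact: FrT M1.
have Lh' : L h by exact: toL.
have Lm : L (- (u * (h + r1))).
  by apply: (@Fr_opp _ _ x0 _ _ iT); apply: LM => //; apply: LD.
exact: (@Fr_add _ _ x0 _ _ _ iZ Zh (@Fr_add _ _ x0 _ _ _ iZ Z1 (@Fr_mulL _ _ x0 _ _ _ iZ Lm Z2))).
Qed.
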